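(* Let $b\ge 2$ be an integer and $d\in\{0,1,\dots,b-1\}$. For $i\ge1$ put $\gamma_i=\sum_{0\le a<b,\ a\ne d}a^i$. Define $u_{0;0}=b$ and, for $m\ge1$, define $u_{0;m}$ recursively by $$(b^{m+1}-b+1)\,u_{0;m}=\sum_{i=1}^{m}\binom{m}{i}\gamma_i\,u_{0;m-i}.$$ For $j\ge1$ and $m\ge0$ define $u_{j;m}$ recursively by $$(b^{m+1}-b+1)\,u_{j;m}=\sum_{i=1}^{m}\binom{m}{i}\gamma_i\,u_{j;m-i}+\sum_{i=0}^{m}\binom{m}{i}d^i\,u_{j-1;m-i}$$ (with the convention $0^0=1$). In particular $u_{j;0}=b$ for all $j\ge0$. Then for every $k\ge0$ and every $l\ge1$, $$H^{(k)}=\sum_{\substack{0<n<b^{l-1}\\ k(n)=k}}\frac1n\;+\;b\sum_{\substack{b^{l-1}\le n<b^{l}\\ k(n)\le k}}\frac1n\;+\;\sum_{m=1}^{\infty}(-1)^m\sum_{\substack{b^{l-1}\le n<b^{l}\\ k(n)\le k}}\frac{u_{k-k(n);m}}{n^{m+1}}.$$ Moreover, the numbers $u_{j;m}$ ($j\ge0$, $m\ge1$) satisfy: (i) $u_{j;m}\ge0$, with $u_{j;m}=0$ only if $j=0$, $b=2$ and $d=1$; (ii) for all $j\ge 0$, $m\ge0$: $u_{j;m+1}\le u_{j;m}$, with strict inequality unless both are $0$; (iii) for each fixed $m\ge1$, the sequence $(u_{j;m})_{j\ge0}$ is strictly increasing and converges to $b/(m+1)$.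
   Context: For an integer $n\ge0$, its (minimal) base-$b$ representation is the string of base-$b$ digits of $n$ without leading zeros (the empty string for $n=0$); $k(n)$ denotes the number of occurrences of the digit $d$ in this representation. For $k\ge0$, the Irwin sum is $H^{(k)}=\sum_{n\ge1,\ k(n)=k}1/n$ (a convergent series of positive terms; it equals $0$ when $b=2$, $d=1$, $k=0$, the series being empty). *)

(* Defs.v *)
From Stdlib Require Import Reals Lra Lia Arith List.
From Coquelicot Require Import Coquelicot.
Import ListNotations.
Open Scope R_scope.

(** Number of occurrences of the digit [d] in the minimal base-[b]
    representation of [n] (no leading zeros; empty string for n = 0).
    The fuel [n] is sufficient when [b >= 2]. *)
Fixpoint dcount_aux (fuel b d n : nat) : nat :=
  match fuel with
  | O => O
  | S f => if Nat.eqb n 0 then O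
           else ((if Nat.eqb (n mod b) d then 1 else 0) + dcount_aux f b d (n / b))%nat
  end.

Definition dcount (b d n : nat) : nat := dcount_aux n b d n.

Definition irwin_term (b d k n : nat) : R :=
  if andb (Nat.leb 1 n) (Nat.eqb (dcount b d n) k) then / INR n else 0.

Definition irwin_sum (b d k : nat) : R := Series (irwin_term b d k).

Definition fsum (lo hi : nat) (f : nat -> R) : R :=
  fold_right Rplus 0 (map f (seq lo (hi - lo))).

Definition gamma (b d i : nat) : R :=
  fold_right Rplus 0 (map (fun a => if Nat.eqb a d then 0 else INR a ^ i) (seq 0 b)).

(** [ulist b d prev base m] = [u_m; u_(m-1); ...; u_0] for one row of the
    recursion.  If [base] is true this is the row j = 0 (u_{0;0} = b and no
    contribution from a previous row); otherwise [prev] is the row j-1 and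
    (b^(m+1)-b+1) u_m = sum_{i=1}^m C(m,i) gamma_i u_(m-i)
                         + sum_{i=0}^m C(m,i) d^i prev(m-i)
    (with 0^0 = 1, as for Stdlib's [pow]). *)
Fixpoint ulist (b d : nat) (prev : nat -> R) (base : bool) (m : nat) : list R :=
  match m with
  | O => [ if base then INR b else prev O / (INR b ^ 1 - INR b + 1) ]
  | S m' =>
      let L := ulist b d prev base m' in
      let s1 := sum_f_R0 (fun k => Binomial.C m (S k) * gamma b d (S k) * nth k L 0) m' in
      let s2 := if base then 0
                else sum_f_R0 (fun i => Binomial.C m i * INR d ^ i * prev (m - i)%nat) m in
      ((s1 + s2) / (INR b ^ (S m) - INR b + 1)) :: L
  end.

Fixpoint u (b d j : nat) : nat -> R :=
  match j with
  | O => fun m => nth 0 (ulist b d (fun _ => 0) true m) 0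
  | S j' => fun m => nth 0 (ulist b d (u b d j') false m) 0
  end.

(* Main.v *)
Require Import Defs.
From Stdlib Require Import Reals Lra Lia Arith List.
From Coquelicot Require Import Coquelicot.
Open Scope R_scope.

Module A.
Open Scope R_scope.

Fixpoint sm (n : nat) (f : nat -> R) : R :=
  match n with O => 0 | S n' => sm n' f + f n' end.

Lemma sm_ext n f g : (forall i, (i < n)%nat -> f i = g i) -> sm n f = sm n g.
Proof. induction n; simpl; intros H; auto. rewrite IHn by (intros; apply H; lia). rewrite H by lia; auto. Qed.

Lemma sm_plus n f g : sm n (fun i => f i + g i) = sm n f + sm n g.
Proof. induction n; simpl; [lra|]. rewrite IHn; lra. Qed.

Lemma sm_minus n f g : sm n (fun i => f i - g i) = sm n f - sm n g.
Proof. induction n; simpl; [lra|]. rewrite IHn; lra. Qed.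

Lemma sm_scal n c f : sm n (fun i => c * f i) = c * sm n f.
Proof. induction n; simpl; [lra|]. rewrite IHn; lra. Qed.

Lemma sm_zero n f : (forall i, (i < n)%nat -> f i = 0) -> sm n f = 0.
Proof. intros H; rewrite (sm_ext n f (fun _ => 0)) by auto. induction n; simpl; auto. rewrite IHn; [lra|]. intros; apply H; lia. Qed.

Lemma sm_le n f g : (forall i, (i < n)%nat -> f i <= g i) -> sm n f <= sm n g.
Proof. induction n; simpl; intros H; [lra|]. assert (sm n f <= sm n g) by (apply IHn; intros; apply H; lia). specialize (H n ltac:(lia)). lra. Qed.

Lemma sm_nonneg n f : (forall i, (i < n)%nat -> 0 <= f i) -> 0 <= sm n f.
Proof. intros H. rewrite <- (sm_zero n (fun _ => 0)) by auto. apply sm_le; auto. Qed.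

Lemma sm_ge_term n f k : (forall i, (i < n)%nat -> 0 <= f i) -> (k < n)%nat -> f k <= sm n f.
Proof. induction n; simpl; intros H Hk; [lia|].
  assert (0 <= sm n f) by (apply sm_nonneg; intros; apply H; lia).
  destruct (Nat.eq_dec k n). subst; lra.
  assert (f k <= sm n f) by (apply IHn; [intros; apply H; lia|lia]). specialize (H n ltac:(lia)). lra. Qed.

Lemma sm_split n p f : sm (n + p) f = sm n f + sm p (fun i => f (n + i)%nat).
Proof. induction p; simpl. rewrite Nat.add_0_r; lra. rewrite Nat.add_succ_r; simpl. rewrite IHp; lra. Qed.

Lemma sm_S_l n f : sm (S n) f = f O + sm n (fun i => f (S i)).
Proof. replace (S n) with (1 + n)%nat by lia. rewrite sm_split. simpl. lra. Qed.

Lemma sm_swap n p f : sm n (fun i => sm p (fun j => f i j)) = sm p (fun j => sm n (fun i => f i j)).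
Proof. induction n; simpl. symmetry; apply sm_zero; auto. rewrite IHn. rewrite <- sm_plus. auto. Qed.

Lemma sm_block n c f : sm (n * c) f = sm n (fun i => sm c (fun t => f (i * c + t)%nat)).
Proof. induction n; simpl; auto. replace (c + n * c)%nat with (n * c + c)%nat by lia.
  rewrite sm_split, IHn. auto. Qed.

Lemma sm_abs n f : Rabs (sm n f) <= sm n (fun i => Rabs (f i)).
Proof. induction n; simpl. rewrite Rabs_R0; lra. eapply Rle_trans. apply Rabs_triang. lra. Qed.

Lemma fold_plus_app x l : fold_right Rplus x l = fold_right Rplus 0 l + x.
Proof. induction l; simpl; lra. Qed.

Lemma fsum_sm lo hi f : fsum lo hi f = sm (hi - lo) (fun i => f (lo + i)%nat).
Proof. unfold fsum. generalize (hi - lo)%nat as n. intros n. induction n. reflexivity.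
  rewrite seq_S, map_app, fold_right_app. change (sm (S n) (fun i => f (lo + i)%nat)) with (sm n (fun i => f (lo + i)%nat) + f (lo + n)%nat).
  rewrite <- IHn. simpl. rewrite fold_plus_app. lra. Qed.

Lemma sum_f_R0_sm f n : sum_f_R0 f n = sm (S n) f.
Proof. induction n; simpl; auto. lra. rewrite IHn; auto. Qed.

Lemma sum_n_sm f n : sum_n f n = sm (S n) f.
Proof. rewrite sum_n_Reals. apply sum_f_R0_sm. Qed.

Lemma sm_if n (d : nat) X Y : (d < n)%nat ->
  sm n (fun a => if Nat.eqb a d then X a else Y a) = sm n (fun a => if Nat.eqb a d then 0 else Y a) + X d.
Proof. induction n; intros H; [lia|]. simpl. destruct (Nat.eq_dec d n).
  subst. rewrite Nat.eqb_refl. rewrite (sm_ext n _ Y), (sm_ext n (fun a => if Nat.eqb a n then 0 else Y a) Y). lra.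
  intros i Hi; destruct (Nat.eqb_spec i n); [lia|auto].
  intros i Hi; destruct (Nat.eqb_spec i n); [lia|auto].
  rewrite IHn by lia. destruct (Nat.eqb_spec n d); [lia|]. lra. Qed.

Lemma is_lim_seq_sm n (f : nat -> nat -> R) (l : nat -> R) :
  (forall i, (i < n)%nat -> is_lim_seq (fun R => f R i) (l i)) ->
  is_lim_seq (fun R => sm n (f R)) (sm n l).
Proof. induction n; simpl; intros H. apply is_lim_seq_const.
  apply is_lim_seq_plus'. apply IHn; intros; apply H; lia. apply H; lia. Qed.

End A.
Import A.

Module B.
Open Scope R_scope.

Section Dig.
Variables b d : nat.
Hypothesis hb : (2 <= b)%nat.

Lemma div_lt n : (0 < n)%nat -> (n / b < n)%nat.
Proof. intros. apply Nat.div_lt; lia. Qed.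

Lemma dcount_aux_fuel f1 f2 n : (n <= f1)%nat -> (n <= f2)%nat ->
  dcount_aux f1 b d n = dcount_aux f2 b d n.
Proof. revert f2 n; induction f1; intros f2 n H1 H2.
  - assert (n = 0)%nat by lia; subst. destruct f2; simpl; auto.
  - destruct f2. assert (n = 0)%nat by lia; subst; simpl; auto.
    simpl. destruct (Nat.eqb_spec n 0); auto. f_equal. apply IHf1.
    assert (n / b < n)%nat by (apply div_lt; lia). lia.
    assert (n / b < n)%nat by (apply div_lt; lia). lia. Qed.

Lemma dcount_pos n : (0 < n)%nat ->
  dcount b d n = ((if Nat.eqb (n mod b) d then 1 else 0) + dcount b d (n / b))%nat.
Proof. intros H. unfold dcount. destruct n; [lia|]. simpl. f_equal. apply dcount_aux_fuel.
  assert (S n / b < S n)%nat by (apply div_lt; lia). lia. lia. Qed.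

Fixpoint cnt (r t : nat) : nat :=
  match r with O => O | S r' => ((if Nat.eqb (t mod b) d then 1 else 0) + cnt r' (t / b))%nat end.

Lemma dcount_split r : forall n t, (1 <= n)%nat -> (t < b ^ r)%nat ->
  dcount b d (n * b ^ r + t) = (dcount b d n + cnt r t)%nat.
Proof. induction r; intros n t Hn Ht.
  - simpl in *. assert (t = 0)%nat by lia. subst. rewrite Nat.mul_1_r, Nat.add_0_r. simpl. lia.
  - rewrite dcount_pos. simpl cnt.
    assert (E1 : ((n * b ^ S r + t) mod b = t mod b)%nat).
    { rewrite Nat.pow_succ_r'. replace (n * (b * b ^ r) + t)%nat with (t + (n * b ^ r) * b)%nat by lia.
      apply Nat.Div0.mod_add. }
    assert (E2 : ((n * b ^ S r + t) / b = n * b ^ r + t / b)%nat).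
    { rewrite Nat.pow_succ_r'. replace (n * (b * b ^ r) + t)%nat with (t + (n * b ^ r) * b)%nat by lia.
      rewrite Nat.div_add by lia. lia. }
    rewrite E1, E2. rewrite IHr. lia. auto.
    rewrite Nat.pow_succ_r' in Ht. apply Nat.Div0.div_lt_upper_bound. lia.
    assert (0 < b ^ S r)%nat by (apply Nat.neq_0_lt_0, Nat.pow_nonzero; lia). nia. Qed.

Lemma cnt_top r a t : (a < b)%nat -> (t < b ^ r)%nat ->
  cnt (S r) (a * b ^ r + t) = ((if Nat.eqb a d then 1 else 0) + cnt r t)%nat.
Proof. revert a t; induction r as [|r IHr]; intros a t Ha Ht.
  - simpl in *. assert (t = 0)%nat by lia. subst. rewrite Nat.mul_1_r, Nat.add_0_r.
    rewrite Nat.mod_small by lia. replace (a + 0)%nat with a by lia. destruct (a =? d); reflexivity.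
  - change (cnt (S (S r)) (a * b ^ S r + t)) with
      (((if Nat.eqb ((a * b ^ S r + t) mod b) d then 1 else 0) + cnt (S r) ((a * b ^ S r + t) / b))%nat).
    assert (E1 : ((a * b ^ S r + t) mod b = t mod b)%nat).
    { rewrite Nat.pow_succ_r'. replace (a * (b * b ^ r) + t)%nat with (t + (a * b ^ r) * b)%nat by lia.
      apply Nat.Div0.mod_add. }
    assert (E2 : ((a * b ^ S r + t) / b = a * b ^ r + t / b)%nat).
    { rewrite Nat.pow_succ_r'. replace (a * (b * b ^ r) + t)%nat with (t + (a * b ^ r) * b)%nat by lia.
      rewrite Nat.div_add by lia. lia. }
    rewrite E1, E2, IHr; auto. simpl cnt. lia.
    rewrite Nat.pow_succ_r' in Ht. apply Nat.Div0.div_lt_upper_bound. lia. Qed.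

End Dig.

End B.
Import B.

Module C.
Open Scope R_scope.

Lemma ulist_nth b d prev base m k : (k <= m)%nat ->
  nth k (ulist b d prev base m) 0 = nth 0 (ulist b d prev base (m - k)) 0.
Proof. revert k; induction m; intros k Hk.
  - assert (k = 0)%nat by lia; subst; auto.
  - destruct k. rewrite Nat.sub_0_r; auto.
    simpl (ulist b d prev base (S m)) at 1. simpl nth at 1. rewrite IHm by lia. f_equal. Qed.

Section U.
Variables b d : nat.
Hypothesis hb : (2 <= b)%nat.
Hypothesis hd : (d < b)%nat.
Let B := INR b.

Definition gam i := sm b (fun a => if Nat.eqb a d then 0 else INR a ^ i).

Lemma gamma_gam i : gamma b d i = gam i.
Proof. unfold gamma. rewrite <- (Nat.sub_0_r b) .
  fold (fsum 0 b (fun a : nat => if Nat.eqb a d then 0 else INR a ^ i)). rewrite fsum_sm. unfold gam.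
  rewrite Nat.sub_0_r. apply sm_ext. auto. Qed.

Lemma Bge2 : 2 <= B.
Proof. unfold B. apply (le_INR 2); lia. Qed.

Lemma sm_const n c : sm n (fun _ => c) = INR n * c.
Proof. induction n; simpl sm. simpl; lra. rewrite IHn, S_INR. lra. Qed.

Lemma gam0 : gam 0 = B - 1.
Proof. unfold gam. pose proof (sm_if b d (fun _ => 1) (fun _ => 1) hd) as H.
  simpl pow.
  rewrite (sm_ext _ (fun a => if Nat.eqb a d then 1 else 1) (fun _ => 1)) in H by (intros; destruct (Nat.eqb i d); auto).
  rewrite sm_const in H. unfold B. lra. Qed.

Lemma gam_nonneg i : 0 <= gam i.
Proof. unfold gam. apply sm_nonneg. intros a _. destruct (Nat.eqb a d). lra. apply pow_le, pos_INR. Qed.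

Lemma u_0 j : u b d j 0 = B.
Proof. induction j; simpl; auto. rewrite IHj. unfold B. simpl. rewrite Rmult_1_r. replace (INR b - INR b + 1) with 1 by ring. field. Qed.

Lemma den_pos m : 0 < B ^ (S m) - B + 1.
Proof. assert (B <= B ^ S m). { simpl. rewrite <- (Rmult_1_r B) at 1. apply Rmult_le_compat_l. pose proof Bge2; lra.
  apply pow_R1_Rle. pose proof Bge2; lra. } lra. Qed.

Definition prevrow j := match j with O => fun _ : nat => 0 | S j' => u b d j' end.
Definition baserow j := match j with O => true | S _ => false end.

Lemma u_unf j m : u b d j m = nth 0 (ulist b d (prevrow j) (baserow j) m) 0.
Proof. destruct j; reflexivity. Qed.

Lemma ulist_S prev base m : nth 0 (ulist b d prev base (S m)) 0 =
  (sm (S m) (fun k => Binomial.C (S m) (S k) * gamma b d (S k) * nth k (ulist b d prev base m) 0) +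
   (if base then 0 else sm (S (S m)) (fun i => Binomial.C (S m) i * INR d ^ i * prev (S m - i)%nat))) /
  (INR b ^ (S (S m)) - INR b + 1).
Proof. rewrite <- !sum_f_R0_sm. reflexivity. Qed.

Lemma Rec j m : (B ^ (S m) - B + 1) * u b d j m =
  sm m (fun k => Binomial.C m (S k) * gam (S k) * u b d j (m - S k)) +
  match j with O => (match m with O => B | _ => 0 end)
  | S j' => sm (S m) (fun i => Binomial.C m i * INR d ^ i * u b d j' (m - i)) end.
Proof. destruct m.
  - rewrite u_0. simpl sm. destruct j. simpl. lra. simpl sm. rewrite u_0. simpl. unfold Binomial.C. simpl. field.
  - rewrite u_unf, ulist_S.
    pose proof (den_pos (S m)) as H. unfold B in *.
    set (den := INR b ^ S (S m) - INR b + 1) in *.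
    field_simplify_eq. 2: lra.
    f_equal.
    + apply sm_ext. intros k Hk. rewrite ulist_nth by lia. rewrite gamma_gam. rewrite <- u_unf. reflexivity.
    + destruct j; simpl baserow; simpl prevrow. auto. auto. Qed.

Lemma sm_scal_r n c f : sm n (fun i => f i * c) = sm n f * c.
Proof. rewrite <- (Rmult_comm c), <- sm_scal. apply sm_ext; intros; ring. Qed.

Definition Phi (v : nat -> nat -> R) j m := sm b (fun a => sm (S m) (fun i =>
  Binomial.C m i * INR a ^ i * (if Nat.eqb a d then match j with O => 0 | S j' => v j' (m - i)%nat end
                                  else v j (m - i)%nat))).

Definition Dsum (v : nat -> nat -> R) j m := match j with O => 0 | S j' =>
   sm (S m) (fun i => Binomial.C m i * INR d ^ i * v j' (m - i)%nat) end.

Lemma Phi_gam v j m : Phi v j m =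
  sm (S m) (fun i => Binomial.C m i * gam i * v j (m - i)%nat) + Dsum v j m.
Proof. unfold Phi.
  rewrite (sm_ext b _ (fun a => if Nat.eqb a d then
      sm (S m) (fun i => Binomial.C m i * INR a ^ i * match j with O => 0 | S j' => v j' (m - i)%nat end)
      else sm (S m) (fun i => Binomial.C m i * INR a ^ i * v j (m - i)%nat))).
  2: { intros a _. destruct (Nat.eqb a d); auto. }
  rewrite sm_if by auto. f_equal.
  - rewrite (sm_ext b _ (fun a => sm (S m) (fun i => Binomial.C m i * v j (m - i)%nat * (if Nat.eqb a d then 0 else INR a ^ i)))).
    2: { intros a _. destruct (Nat.eqb a d). symmetry; apply sm_zero; intros; ring. apply sm_ext; intros; ring. }
    rewrite sm_swap. apply sm_ext. intros i _. rewrite sm_scal. unfold gam. ring.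
  - unfold Dsum. destruct j. apply sm_zero; intros; ring. auto. Qed.

Definition delta j m := match j, m with O, O => B | _, _ => 0 end.

Lemma C_n0 m : Binomial.C m 0 = 1.
Proof. unfold Binomial.C. rewrite Nat.sub_0_r. simpl. field. apply INR_fact_neq_0. Qed.

Lemma u_fix j m : B ^ (S m) * u b d j m = delta j m + Phi (u b d) j m.
Proof. rewrite Phi_gam. rewrite sm_S_l. rewrite gam0, C_n0, Nat.sub_0_r.
  pose proof (Rec j m) as H.
  replace (sm m (fun i => Binomial.C m (S i) * gam (S i) * u b d j (m - S i)%nat))
    with ((B ^ S m - B + 1) * u b d j m - match j with O => (match m with O => B | _ => 0 end)
  | S j' => sm (S m) (fun i => Binomial.C m i * INR d ^ i * u b d j' (m - i)) end) by lra.
  unfold Dsum, delta. destruct j; destruct m; simpl pow; ring. Qed.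

End U.

End C.
Import C.

Module D.
Open Scope R_scope.

Lemma C_nonneg n k : 0 <= Binomial.C n k.
Proof. unfold Binomial.C. apply Rmult_le_pos. apply pos_INR. apply Rlt_le, Rinv_0_lt_compat.
  apply Rmult_lt_0_compat; apply INR_fact_lt_0. Qed.

Lemma sm_telescope n (f : nat -> R) : sm n (fun a => f (S a) - f a) = f n - f O.
Proof. induction n; simpl; [lra|]. rewrite IHn; lra. Qed.

Section P.
Variables b d : nat.
Hypothesis hb : (2 <= b)%nat.
Hypothesis hd : (d < b)%nat.
Let B := INR b.
Let gam := gam b d.

Definition den m := B ^ (S m) - B + 1.

Definition RecF (X P : nat -> R) := forall m, den m * X m =
  sm m (fun k => Binomial.C m (S k) * gam (S k) * X (m - S k)%nat) + P m.

Lemma den_pos' m : 0 < den m.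
Proof. apply (den_pos b d hb hd). Qed.

Lemma gen_nonneg X P : RecF X P -> (forall m, 0 <= P m) -> forall m, 0 <= X m.
Proof. intros H HP. assert (forall n m, (m <= n)%nat -> 0 <= X m).
  { induction n; intros m Hm.
    - assert (m = 0)%nat by lia; subst. pose proof (H 0%nat). simpl sm in H0. pose proof (den_pos' 0). pose proof (HP 0%nat).
      nra.
    - destruct (Nat.eq_dec m (S n)). 2: apply IHn; lia. subst.
      pose proof (H (S n)). pose proof (den_pos' (S n)). pose proof (HP (S n)).
      assert (0 <= sm (S n) (fun k => Binomial.C (S n) (S k) * gam (S k) * X (S n - S k)%nat)).
      { apply sm_nonneg. intros i Hi. apply Rmult_le_pos. apply Rmult_le_pos. apply C_nonneg. apply gam_nonneg.
        apply IHn. lia. }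
      nra. }
  intros m; apply (H0 m); lia. Qed.

Lemma gen_pos X P m : RecF X P -> (forall m, 0 <= P m) ->
  (0 < P m \/ 0 < sm m (fun k => Binomial.C m (S k) * gam (S k) * X (m - S k)%nat)) -> 0 < X m.
Proof. intros H HP Hm. pose proof (gen_nonneg X P H HP) as HX. pose proof (H m). pose proof (den_pos' m).
  assert (0 <= sm m (fun k => Binomial.C m (S k) * gam (S k) * X (m - S k)%nat)).
  { apply sm_nonneg. intros i Hi. apply Rmult_le_pos. apply Rmult_le_pos. apply C_nonneg. apply gam_nonneg. auto. }
  pose proof (HP m). assert (0 < den m * X m) by lra.
  apply (Rmult_lt_reg_l (den m)); lra. Qed.

Lemma gen_diff X Y PX PY : RecF X PX -> RecF Y PY -> RecF (fun m => X m - Y m) (fun m => PX m - PY m).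
Proof. intros HX HY m. rewrite Rmult_minus_distr_l, HX, HY.
  rewrite (sm_ext m (fun k => _ * (X (m - S k)%nat - Y (m - S k)%nat))
    (fun k => Binomial.C m (S k) * gam (S k) * X (m - S k)%nat - Binomial.C m (S k) * gam (S k) * Y (m - S k)%nat))
    by (intros; ring).
  rewrite sm_minus. ring. Qed.

Definition Pu j m := match j with O => (match m with O => B | _ => 0 end)
  | S j' => sm (S m) (fun i => Binomial.C m i * INR d ^ i * u b d j' (m - i)) end.

Lemma RecU j : RecF (u b d j) (Pu j).
Proof. intros m. unfold den, gam. apply Rec; auto. Qed.

Lemma u_nonneg j m : 0 <= u b d j m.
Proof. revert m; induction j; intros m; apply (gen_nonneg _ _ (RecU _)); intros m'; unfold Pu.
  destruct m'; [pose proof Bge2 b d hb hd; unfold B; lra | lra].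
  apply sm_nonneg; intros i _. apply Rmult_le_pos; [apply Rmult_le_pos|]; auto. apply C_nonneg. apply pow_le, pos_INR. Qed.

Lemma sm_last_term n f : (forall i, (i < S n)%nat -> 0 <= f i) -> f n <= sm (S n) f.
Proof. intros; apply sm_ge_term; auto. Qed.

Lemma gam_pos m : ~ (b = 2%nat /\ d = 1%nat) -> 0 < gam m.
Proof. intros Hn. set (a := if Nat.eqb d 1 then 2%nat else 1%nat).
  assert (Ha : (a < b)%nat /\ a <> d /\ a <> 0%nat).
  { unfold a; destruct (Nat.eqb_spec d 1); lia. }
  assert (0 < INR a ^ m) by (apply pow_lt; apply (lt_INR 0); lia).
  unfold gam, C.gam. eapply Rlt_le_trans. 2: apply sm_ge_term with (k := a).
  destruct (Nat.eqb_spec a d). lia. exact H. intros i _. destruct (Nat.eqb i d). lra. apply pow_le, pos_INR. lia. Qed.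

Lemma u_pos j m : (1 <= m)%nat -> (j <> 0%nat \/ ~ (b = 2%nat /\ d = 1%nat)) -> 0 < u b d j m.
Proof. intros Hm Hj. destruct m. lia.
  assert (Hnn : forall m', 0 <= Pu j m').
  { intros m'; destruct j; unfold Pu. destruct m'; [pose proof Bge2 b d hb hd; unfold B; lra | lra].
    apply sm_nonneg; intros i _. apply Rmult_le_pos; [apply Rmult_le_pos|]. apply C_nonneg. apply pow_le, pos_INR. apply u_nonneg. }
  assert (Hs : ~ (b = 2%nat /\ d = 1%nat) -> 0 < sm (S m) (fun k => Binomial.C (S m) (S k) * gam (S k) * u b d j (S m - S k)%nat)).
  { intros Hn. eapply Rlt_le_trans. 2: apply sm_last_term.
    rewrite C_n_n, Nat.sub_diag, u_0. pose proof (gam_pos (S m) Hn). pose proof (Bge2 b d hb hd). unfold B. nra.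
    intros i _. apply Rmult_le_pos; [apply Rmult_le_pos|]. apply C_nonneg. apply gam_nonneg. apply u_nonneg. }
  apply (gen_pos _ _ _ (RecU j) Hnn).
  destruct (Nat.eq_dec d 0).
  - right. apply Hs. lia.
  - destruct j. right; apply Hs; destruct Hj; [lia|auto].
    left. unfold Pu. eapply Rlt_le_trans. 2: apply sm_last_term.
    rewrite C_n_n, Nat.sub_diag, u_0. pose proof (Bge2 b d hb hd). unfold B.
    assert (0 < INR d ^ S m) by (apply pow_lt; apply (lt_INR 0); lia). nra.
    intros i _. apply Rmult_le_pos; [apply Rmult_le_pos|]. apply C_nonneg. apply pow_le, pos_INR. apply u_nonneg. Qed.

End P.

End D.
Import D.

Module E.
Open Scope R_scope.

Lemma lim_scal (f : nat -> R) (c l : R) : is_lim_seq f l -> is_lim_seq (fun n => c * f n) (c * l).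
Proof. intros H. apply (is_lim_seq_scal_l f c l) in H. exact H. Qed.

Lemma lim_uniq (f : nat -> R) (a c : R) : is_lim_seq f a -> is_lim_seq f c -> a = c.
Proof. intros H1 H2. apply is_lim_seq_unique in H1. apply is_lim_seq_unique in H2. rewrite H1 in H2. injection H2; auto. Qed.

Lemma lim_ext (f g : nat -> R) l : (forall n, f n = g n) -> is_lim_seq f l -> is_lim_seq g l.
Proof. intros H. apply is_lim_seq_ext; auto. Qed.

Lemma sm_Sr n f : sm (S n) f = sm n f + f n.
Proof. reflexivity. Qed.

Section V.
Variables b d : nat.
Hypothesis hb : (2 <= b)%nat.
Hypothesis hd : (d < b)%nat.
Let B := INR b.
Let gam := gam b d.

Definition v m := B / INR (S m).

Lemma C_ratio m i : (i <= m)%nat -> Binomial.C m i / INR (S (m - i)) = Binomial.C (S m) i / INR (S m).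
Proof. intros Hi. rewrite pascal_step2 by auto. replace (S m - i)%nat with (S (m - i)) by lia.
  field. split; apply not_0_INR; lia. Qed.

Lemma key_binom a m : sm (S m) (fun i => Binomial.C m i * INR a ^ i * v (m - i)) =
   B / INR (S m) * ((INR a + 1) ^ (S m) - INR a ^ (S m)).
Proof. unfold v.
  rewrite (sm_ext _ _ (fun i => B / INR (S m) * (Binomial.C (S m) i * INR a ^ i))).
  2: { intros i Hi. replace (Binomial.C m i * INR a ^ i * (B / INR (S (m - i)))) with
        (B * INR a ^ i * (Binomial.C m i / INR (S (m - i)))) by (field; apply not_0_INR; lia).
       rewrite C_ratio by lia. field. apply not_0_INR; lia. }
  rewrite sm_scal. f_equal. rewrite binomial, sum_f_R0_sm.
  rewrite (sm_Sr (S m) (fun i => Binomial.C (S m) i * INR a ^ i * 1 ^ (S m - i))). cbv beta.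
  rewrite C_n_n, Nat.sub_diag. rewrite (sm_ext (S m) (fun i => Binomial.C (S m) i * INR a ^ i * 1 ^ (S m - i)) (fun i => Binomial.C (S m) i * INR a ^ i)).
  simpl pow at 2. ring. intros i Hi. rewrite pow1. ring. Qed.

Lemma Phi_v m : sm b (fun a => sm (S m) (fun i => Binomial.C m i * INR a ^ i * v (m - i))) = B ^ (S m) * v m.
Proof. rewrite (sm_ext b _ (fun a => B / INR (S m) * ((INR (S a)) ^ (S m) - INR a ^ (S m)))).
  2: { intros a _. rewrite key_binom, (S_INR a). auto. }
  rewrite sm_scal, (sm_telescope b (fun a => INR a ^ S m)). unfold v, B. simpl INR at 3. rewrite pow_ne_zero by lia. ring. Qed.

Definition Pv m := sm (S m) (fun i => Binomial.C m i * INR d ^ i * v (m - i)).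

Lemma RecV : RecF b d v Pv.
Proof. intros m. pose proof (Phi_gam b d hd (fun _ m => v m) 1%nat m) as H.
  unfold Phi in H.
  rewrite (sm_ext b _ (fun a => sm (S m) (fun i => Binomial.C m i * INR a ^ i * v (m - i)))) in H.
  2: { intros a _. apply sm_ext. intros i _. destruct (Nat.eqb a d); auto. }
  rewrite Phi_v in H. rewrite sm_S_l, C_n0, gam0, Nat.sub_0_r in H by auto. unfold Dsum in H.
  unfold den, Pv. unfold B in H. lra. Qed.

Definition E j m := v m - u b d j m.

Lemma RecE j : RecF b d (E j) (fun m => Pv m - Pu b d j m).
Proof. apply gen_diff. apply RecV. apply RecU; auto. Qed.

Lemma v_pos m : 0 < v m.
Proof. unfold v, B. apply Rdiv_lt_0_compat. pose proof (Bge2 b d hb hd); lra. apply (lt_INR 0); lia. Qed.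

Lemma E_pos j : (forall m, 0 <= E j m) /\ (forall m, (1 <= m)%nat -> 0 < E j m).
Proof. induction j.
  - assert (HP : forall m, 0 <= Pv m - Pu b d 0 m /\ ((1 <= m)%nat -> 0 < Pv m - Pu b d 0 m)).
    { intros m. unfold Pv, Pu. destruct m.
      + simpl sm. rewrite C_n0. unfold v. simpl INR. simpl pow. split; [|lia]. unfold B; lra.
      + rewrite sm_S_l, C_n0, Nat.sub_0_r. simpl pow.
        assert (0 <= sm (S m) (fun i => Binomial.C (S m) (S i) * (INR d * INR d ^ i) * v (S m - S i))).
        { apply sm_nonneg; intros. apply Rmult_le_pos; [apply Rmult_le_pos; [apply C_nonneg| apply Rmult_le_pos; [apply pos_INR|apply pow_le, pos_INR]] | apply Rlt_le, v_pos]. }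
        pose proof (v_pos (S m)). split; intros; lra. }
    split. apply (gen_nonneg b d hb hd _ _ (RecE 0)). intros; apply HP.
    intros m Hm. apply (gen_pos b d hb hd _ _ m (RecE 0)). intros; apply HP. left; apply HP; auto.
  - destruct IHj as [IH1 IH2].
    assert (HP : forall m, Pv m - Pu b d (S j) m = sm (S m) (fun i => Binomial.C m i * INR d ^ i * E j (m - i))).
    { intros m. unfold Pv, Pu, E. rewrite <- sm_minus. apply sm_ext; intros; ring. }
    assert (HP0 : forall m, 0 <= Pv m - Pu b d (S j) m).
    { intros m; rewrite HP. apply sm_nonneg; intros; apply Rmult_le_pos; [apply Rmult_le_pos|]; [apply C_nonneg|apply pow_le, pos_INR|auto]. }
    split. apply (gen_nonneg b d hb hd _ _ (RecE (S j)) HP0).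
    intros m Hm. apply (gen_pos b d hb hd _ _ m (RecE (S j)) HP0). left. rewrite HP.
    eapply Rlt_le_trans. 2: apply sm_ge_term with (k := 0%nat). rewrite C_n0, Nat.sub_0_r. simpl. pose proof (IH2 m Hm). lra.
    intros; apply Rmult_le_pos; [apply Rmult_le_pos|]; [apply C_nonneg|apply pow_le, pos_INR|auto]. lia. Qed.

Lemma u_lt_v j m : (1 <= m)%nat -> u b d j m < v m.
Proof. intros Hm. pose proof (proj2 (E_pos j) m Hm). unfold E in H. lra. Qed.

Lemma u_le_v j m : u b d j m <= v m.
Proof. pose proof (proj1 (E_pos j) m). unfold E in H. lra. Qed.

Lemma u_incr : forall j m, (1 <= m)%nat -> u b d j m < u b d (S j) m.
Proof. assert (H : forall j, RecF b d (fun m => u b d (S j) m - u b d j m) (fun m => Pu b d (S j) m - Pu b d j m)).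
  { intros; apply gen_diff; apply RecU; auto. }
  assert (Hs : forall j, (forall m, 0 <= u b d (S j) m - u b d j m) /\ (forall m, (1 <= m)%nat -> 0 < u b d (S j) m - u b d j m)).
  { intros j; induction j.
    - assert (HP : forall m, 0 <= Pu b d 1 m - Pu b d 0 m /\ ((1 <= m)%nat -> 0 < Pu b d 1 m - Pu b d 0 m)).
      { intros m. unfold Pu. destruct m.
        + simpl sm. rewrite C_n0. split; [|lia]. lra.
        + assert (Hnn : forall i, (i < S (S m))%nat -> 0 <= Binomial.C (S m) i * INR d ^ i * u b d 0 (S m - i))
            by (intros; apply Rmult_le_pos; [apply Rmult_le_pos|]; [apply C_nonneg|apply pow_le, pos_INR|apply u_nonneg; auto]).
          assert (0 < sm (S (S m)) (fun i => Binomial.C (S m) i * INR d ^ i * u b d 0 (S m - i))).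
          { destruct (Nat.eq_dec d 0).
            - eapply Rlt_le_trans. 2: apply sm_ge_term with (k := 0%nat); auto; lia.
              rewrite C_n0, Nat.sub_0_r. simpl pow. pose proof (u_pos b d hb hd 0 (S m) ltac:(lia) ltac:(right; lia)). lra.
            - eapply Rlt_le_trans. 2: apply sm_ge_term with (k := S m); auto; lia.
              rewrite C_n_n, Nat.sub_diag, u_0. pose proof (Bge2 b d hb hd).
              assert (0 < INR d ^ S m) by (apply pow_lt; apply (lt_INR 0); lia). nra. }
          split; intros; lra. }
      split. apply (gen_nonneg b d hb hd _ _ (H 0%nat)). intros; apply HP.
      intros m Hm. apply (gen_pos b d hb hd _ _ m (H 0%nat)). intros; apply HP. left; apply HP; auto.
    - destruct IHj as [IH1 IH2].
      assert (HP : forall m, Pu b d (S (S j)) m - Pu b d (S j) m = sm (S m) (fun i => Binomial.C m i * INR d ^ i * (u b d (S j) (m - i) - u b d j (m - i)))).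
      { intros m. unfold Pu. rewrite <- sm_minus. apply sm_ext; intros; ring. }
      assert (HP0 : forall m, 0 <= Pu b d (S (S j)) m - Pu b d (S j) m).
      { intros m; rewrite HP. apply sm_nonneg; intros; apply Rmult_le_pos; [apply Rmult_le_pos|]; [apply C_nonneg|apply pow_le, pos_INR|auto]. }
      split. apply (gen_nonneg b d hb hd _ _ (H (S j)) HP0).
      intros m Hm. apply (gen_pos b d hb hd _ _ m (H (S j)) HP0). left. rewrite HP.
      eapply Rlt_le_trans. 2: apply sm_ge_term with (k := 0%nat). rewrite C_n0, Nat.sub_0_r. simpl pow. pose proof (IH2 m Hm). lra.
      intros; apply Rmult_le_pos; [apply Rmult_le_pos|]; [apply C_nonneg|apply pow_le, pos_INR|auto]. lia. }
  intros j m Hm. pose proof (proj2 (Hs j) m Hm). lra. Qed.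

End V.

End E.
Import E.

Module F.
Open Scope R_scope.

Section L.
Variables b d : nat.
Hypothesis hb : (2 <= b)%nat.
Hypothesis hd : (d < b)%nat.
Let B := INR b.

Lemma Bpow_gt m : (1 <= m)%nat -> B < B ^ (S m).
Proof. intros Hm. pose proof (Bge2 b d hb hd). fold B in H. simpl.
  assert (B <= B ^ m). { destruct m. lia. simpl. rewrite <- (Rmult_1_r B) at 1. apply Rmult_le_compat_l. lra. apply pow_R1_Rle. lra. }
  nra. Qed.

Lemma E_lim : forall m, is_lim_seq (fun j => E b d j m) 0.
Proof. assert (forall n m, (m <= n)%nat -> is_lim_seq (fun j => E b d j m) 0).
  2: { intros m; apply (H m); lia. }
  induction n; intros m Hm.
  - assert (m = 0)%nat by lia; subst. eapply lim_ext. 2: apply is_lim_seq_const.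
    intros j. unfold E, v. rewrite u_0. simpl. field.
  - destruct (Nat.eq_dec m (S n)). 2: apply IHn; lia. subst m. set (m := S n).
    assert (Hdec : forall j, E b d (S j) m <= E b d j m).
    { intros j. unfold E. pose proof (u_incr b d hb hd j m ltac:(unfold m; lia)). lra. }
    destruct (ex_finite_lim_seq_decr (fun j => E b d j m) 0 Hdec (fun j => proj1 (E_pos b d hb hd j) m)) as [e He].
    set (Lf := fun m' => if Nat.ltb m' m then 0 else e).
    assert (HL : forall m', (m' <= m)%nat -> is_lim_seq (fun j => E b d j m') (Lf m')).
    { intros m' Hm'. unfold Lf. destruct (Nat.ltb_spec m' m). apply IHn; unfold m in *; lia.
      assert (m' = m) by lia. subst; auto. }
    assert (Hr : forall j, den b m * E b d (S j) m =
      sm m (fun k => Binomial.C m (S k) * gam b d (S k) * E b d (S j) (m - S k)%nat) +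
      sm (S m) (fun i => Binomial.C m i * INR d ^ i * E b d j (m - i))).
    { intros j. rewrite (RecE b d hb hd (S j) m). f_equal. unfold Pv, Pu, E. rewrite <- sm_minus. apply sm_ext; intros; ring. }
    assert (H1 : is_lim_seq (fun j => den b m * E b d (S j) m) (den b m * e)).
    { apply lim_scal. apply (is_lim_seq_incr_1 (fun j => E b d j m) e). auto. }
    assert (H2 : is_lim_seq (fun j => den b m * E b d (S j) m)
      (sm m (fun k => Binomial.C m (S k) * gam b d (S k) * Lf (m - S k)%nat) +
       sm (S m) (fun i => Binomial.C m i * INR d ^ i * Lf (m - i)%nat))).
    { eapply lim_ext. intros j; symmetry; apply Hr.
      apply is_lim_seq_plus'.
      - apply is_lim_seq_sm. intros i Hi. apply lim_scal.
        apply (is_lim_seq_incr_1 (fun j => E b d j (m - S i)%nat)). apply HL. lia.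
      - apply is_lim_seq_sm. intros i Hi. apply lim_scal. apply HL. lia. }
    pose proof (lim_uniq _ _ _ H1 H2) as Heq.
    rewrite sm_zero in Heq. 2: { intros i Hi. unfold Lf. destruct (Nat.ltb_spec (m - S i) m). ring. lia. }
    rewrite sm_S_l, C_n0, Nat.sub_0_r in Heq.
    rewrite sm_zero in Heq. 2: { intros i Hi. unfold Lf. destruct (Nat.ltb_spec (m - S i) m). ring. lia. }
    unfold Lf in Heq. rewrite Nat.ltb_irrefl in Heq.
    assert (Hb : B < B ^ S m) by (apply Bpow_gt; unfold m; lia).
    unfold den in Heq. fold B in Heq.
    assert (e = 0). { replace ((B ^ S m - B + 1) * e) with ((B ^ S m - B) * e + e) in Heq by ring. assert ((B ^ S m - B) * e = 0) by lra. apply Rmult_integral in H. destruct H; lra. }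
    subst e. auto. Qed.

Lemma u_lim m : is_lim_seq (fun j => u b d j m) (B / INR (m + 1)).
Proof. rewrite Nat.add_1_r.
  pose proof (is_lim_seq_minus' (fun _ => v b m) (fun j => E b d j m) (v b m) 0 (is_lim_seq_const _) (E_lim m)) as H.
  rewrite Rminus_0_r in H. eapply lim_ext; [|exact H]. intros; unfold E; ring. Qed.

End L.

End F.
Import F.

Module G.
Open Scope R_scope.

Section W.
Variables b d : nat.
Hypothesis hb : (2 <= b)%nat.
Hypothesis hd : (d < b)%nat.
Let B := INR b.

Lemma B_pos : 0 < B.
Proof. pose proof (Bge2 b d hb hd). unfold B in *; lra. Qed.

Lemma Bpow_pos r : 0 < B ^ r.
Proof. apply pow_lt, B_pos. Qed.

Definition Wr r j (g : R -> R) := sm (b ^ r) (fun t => if Nat.eqb (cnt b d r t) j then g (INR t / B ^ r) / B ^ r else 0).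
Definition W R j g := sm (S R) (fun r => Wr r j g).

Lemma Wr_ext r j g h : (forall x, g x = h x) -> Wr r j g = Wr r j h.
Proof. intros H. unfold Wr. apply sm_ext. intros. rewrite H. auto. Qed.

Lemma Wr_plus r j g h : Wr r j (fun x => g x + h x) = Wr r j g + Wr r j h.
Proof. unfold Wr. rewrite <- sm_plus. apply sm_ext; intros. destruct (Nat.eqb _ j). field. apply Rgt_not_eq, Bpow_pos. ring. Qed.

Lemma Wr_scal r j c g : Wr r j (fun x => c * g x) = c * Wr r j g.
Proof. unfold Wr. rewrite <- sm_scal. apply sm_ext; intros. destruct (Nat.eqb _ j). field. apply Rgt_not_eq, Bpow_pos. ring. Qed.

Lemma Wr_sm r j n (F : nat -> R -> R) : Wr r j (fun x => sm n (fun i => F i x)) = sm n (fun i => Wr r j (F i)).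
Proof. induction n. unfold Wr. simpl. apply sm_zero. intros. destruct (Nat.eqb _ j); lra.
  simpl. rewrite Wr_plus, IHn. auto. Qed.

Lemma Wr_le r j g h : (forall t, (t < b ^ r)%nat -> g (INR t / B ^ r) <= h (INR t / B ^ r)) -> Wr r j g <= Wr r j h.
Proof. intros H. unfold Wr. apply sm_le. intros t Ht. destruct (Nat.eqb _ j); [|lra].
  unfold Rdiv. apply Rmult_le_compat_r. left; apply Rinv_0_lt_compat, Bpow_pos. apply H; auto. Qed.

Lemma Wr_zero r j : Wr r j (fun _ => 0) = 0.
Proof. unfold Wr. apply sm_zero. intros. destruct (Nat.eqb _ j); lra. Qed.

Lemma x_dom r t : (t < b ^ r)%nat -> 0 <= INR t / B ^ r /\ INR t / B ^ r <= 1 - / B ^ r.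
Proof. intros Ht. pose proof (Bpow_pos r). split. apply Rdiv_le_0_compat; auto. apply pos_INR.
  assert (INR t + 1 <= B ^ r). { unfold B. rewrite <- pow_INR, <- S_INR. apply le_INR. lia. }
  apply (Rmult_le_reg_r (B ^ r)); auto. field_simplify; try lra. Qed.

Lemma Wr_nonneg r j g : (forall x, 0 <= x <= 1 -> 0 <= g x) -> 0 <= Wr r j g.
Proof. intros H. rewrite <- (Wr_zero r j). apply Wr_le. intros t Ht. apply H.
  pose proof (x_dom r t Ht). pose proof (Bpow_pos r). split. lra. assert (0 < / B ^ r) by (apply Rinv_0_lt_compat; auto). lra. Qed.

Lemma Wr_top r j g : Wr (S r) j g = / B * sm b (fun a =>
   if Nat.eqb a d then match j with O => 0 | S j' => Wr r j' (fun y => g ((INR a + y) / B)) end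
   else Wr r j (fun y => g ((INR a + y) / B))).
Proof. unfold Wr. change (b ^ S r)%nat with (b * b ^ r)%nat. rewrite sm_block. rewrite <- sm_scal.
  apply sm_ext. intros a Ha.
  assert (Hx : forall t, INR (a * b ^ r + t) / B ^ S r = (INR a + INR t / B ^ r) / B).
  { intros t. rewrite plus_INR, mult_INR, pow_INR. fold B. simpl pow. pose proof (Bpow_pos r). pose proof B_pos. field. lra. }
  assert (Hy : forall y, y / B ^ S r = / B * (y / B ^ r)).
  { intros y. simpl pow. pose proof (Bpow_pos r). pose proof B_pos. field. lra. }
  rewrite (sm_ext _ _ (fun t => / B * (if Nat.eqb a d then match j with O => 0 | S j' =>
      (if Nat.eqb (cnt b d r t) j' then g ((INR a + INR t / B ^ r) / B) / B ^ r else 0) end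
      else (if Nat.eqb (cnt b d r t) j then g ((INR a + INR t / B ^ r) / B) / B ^ r else 0)))).
  2: { intros t Ht. rewrite cnt_top by lia. rewrite Hx, Hy.
       destruct (Nat.eqb_spec a d); destruct j.
       - simpl. ring.
       - simpl. destruct (Nat.eqb (cnt b d r t) j); ring.
       - simpl. destruct (Nat.eqb (cnt b d r t) 0); ring.
       - simpl Nat.add. destruct (Nat.eqb (cnt b d r t) (S j)); ring. }
  rewrite sm_scal. f_equal. destruct (Nat.eqb a d); auto. destruct j; auto. apply sm_zero; auto. Qed.

Definition U R j m := W R j (fun x => x ^ m).

Lemma Wr_binom r j a m : B ^ (S m) * (/ B * Wr r j (fun y => ((INR a + y) / B) ^ m)) =
  sm (S m) (fun i => Binomial.C m i * INR a ^ i * Wr r j (fun y => y ^ (m - i))).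
Proof. rewrite (Wr_ext r j _ (fun y => / B ^ m * sm (S m) (fun i => Binomial.C m i * INR a ^ i * y ^ (m - i)))).
  2: { intros y. rewrite Rdiv_def, Rpow_mult_distr, binomial, sum_f_R0_sm, pow_inv. ring. }
  rewrite Wr_scal, Wr_sm. rewrite (sm_ext _ (fun i => Wr r j _) (fun i => Binomial.C m i * INR a ^ i * Wr r j (fun y => y ^ (m - i)))).
  2: { intros i _. rewrite <- Wr_scal. apply Wr_ext. intros; ring. }
  simpl pow. pose proof B_pos. pose proof (Bpow_pos m). field. split; lra. Qed.

Lemma Wr0 j g : Wr 0 j g = match j with O => g 0 | _ => 0 end.
Proof. unfold Wr. simpl. destruct j; simpl. replace (0 / 1) with 0 by field. field. lra. Qed.

Lemma U_rec R j m : B ^ (S m) * U (S R) j m = delta b j m + Phi b d (U R) j m.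
Proof. unfold U, W. rewrite sm_S_l, Wr0. rewrite Rmult_plus_distr_l. f_equal.
  - unfold delta. destruct j; destruct m; simpl; try ring. fold B. ring.
  - rewrite <- sm_scal. rewrite (sm_ext _ _ (fun r => sm b (fun a => sm (S m) (fun i => Binomial.C m i * INR a ^ i *
       (if Nat.eqb a d then match j with O => 0 | S j' => Wr r j' (fun y => y ^ (m - i)) end
        else Wr r j (fun y => y ^ (m - i))))))).
    2: { intros r _. rewrite Wr_top. rewrite <- Rmult_assoc, (Rmult_comm (B ^ S m)), Rmult_assoc, <- sm_scal, <- sm_scal.
         apply sm_ext. intros a _. rewrite <- Rmult_assoc, (Rmult_comm (/ B)), Rmult_assoc.
         destruct (Nat.eqb a d).
         - destruct j. rewrite Rmult_0_r, Rmult_0_r. symmetry; apply sm_zero; intros; ring.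
           rewrite Wr_binom. auto.
         - rewrite Wr_binom. auto. }
    unfold Phi. rewrite sm_swap. apply sm_ext. intros a _. rewrite sm_swap. apply sm_ext. intros i _.
    rewrite sm_scal. f_equal. destruct (Nat.eqb a d). destruct j. apply sm_zero; auto. auto. auto. Qed.

End W.

End G.
Import G.

Module H.
Open Scope R_scope.

Section HH.
Variables b d : nat.
Hypothesis hb : (2 <= b)%nat.
Hypothesis hd : (d < b)%nat.
Let B := INR b.

Lemma Phi_mono v1 v2 j m : (forall j m, v1 j m <= v2 j m) -> Phi b d v1 j m <= Phi b d v2 j m.
Proof. intros H. unfold Phi. apply sm_le; intros a _. apply sm_le; intros i _.
  apply Rmult_le_compat_l. apply Rmult_le_pos. apply C_nonneg. apply pow_le, pos_INR.
  destruct (Nat.eqb a d); auto. destruct j; auto. lra. Qed.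

Lemma Phi_zero j m : Phi b d (fun _ _ => 0) j m = 0.
Proof. unfold Phi. apply sm_zero; intros a _. apply sm_zero; intros i _. destruct (Nat.eqb a d); try destruct j; ring. Qed.

Lemma U0 j m : B ^ (S m) * U b d 0 j m = delta b j m.
Proof. unfold U, W. simpl sm. rewrite Wr0. unfold delta. destruct j; destruct m; simpl; try ring. unfold B; ring. Qed.

Lemma U_le_u R j m : U b d R j m <= u b d j m.
Proof. revert j m. induction R; intros j m; apply (Rmult_le_reg_l (B ^ S m)).
  - apply (Bpow_pos b d hb hd).
  - unfold B; rewrite (u_fix b d hb hd).
    fold B. rewrite U0. pose proof (Phi_mono (fun _ _ => 0) (u b d) j m (fun j m => u_nonneg b d hb hd j m)).
    rewrite Phi_zero in H. lra.
  - apply (Bpow_pos b d hb hd).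
  - unfold B; rewrite (u_fix b d hb hd).
    rewrite U_rec by auto. pose proof (Phi_mono _ (u b d) j m IHR). lra. Qed.

Lemma U_incr R j m : U b d R j m <= U b d (S R) j m.
Proof. unfold U, W. rewrite (sm_Sr (S R)). assert (0 <= Wr b d (S R) j (fun x => x ^ m)).
  apply Wr_nonneg; auto. intros x Hx. apply pow_le; lra. lra. Qed.

Definition Lm j m := real (Lim_seq (fun R => U b d R j m)).

Lemma U_Lm j m : is_lim_seq (fun R => U b d R j m) (Lm j m).
Proof. destruct (ex_finite_lim_seq_incr (fun R => U b d R j m) (u b d j m) (fun R => U_incr R j m) (fun R => U_le_u R j m)) as [l Hl].
  unfold Lm. rewrite (is_lim_seq_unique _ _ Hl). simpl. exact Hl. Qed.

Lemma Phi_lim (V : nat -> nat -> nat -> R) (L : nat -> nat -> R) j m : (forall j m, is_lim_seq (fun R => V R j m) (L j m)) ->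
  is_lim_seq (fun R => Phi b d (V R) j m) (Phi b d L j m).
Proof. intros H. unfold Phi. apply is_lim_seq_sm; intros a _. apply is_lim_seq_sm; intros i _.
  apply lim_scal. destruct (Nat.eqb a d). destruct j. apply is_lim_seq_const. apply H. apply H. Qed.

Lemma fix_expand X j m : B ^ (S m) * X j m = delta b j m + Phi b d X j m ->
  (B ^ S m - B + 1) * X j m = delta b j m + sm m (fun k => Binomial.C m (S k) * gam b d (S k) * X j (m - S k)%nat) + Dsum d X j m.
Proof. intros H. rewrite (Phi_gam b d hd), sm_S_l, C_n0, (gam0 b d hd), Nat.sub_0_r in H. fold B in H. lra. Qed.

Lemma fix_unique X : (forall j m, B ^ (S m) * X j m = delta b j m + Phi b d X j m) -> forall j m, X j m = u b d j m.
Proof. intros HX j. induction j.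
  - assert (forall n m, (m <= n)%nat -> X 0%nat m = u b d 0 m). 2: intros m; apply (H m); lia.
    induction n; intros m Hm.
    + assert (m = 0)%nat by lia; subst. pose proof (fix_expand X 0 0 (HX 0%nat 0%nat)).
      pose proof (fix_expand (u b d) 0 0 (u_fix b d hb hd 0 0)). simpl sm in *. unfold Dsum in *.
      pose proof (den_pos b d hb hd 0). fold B in H1. apply (Rmult_eq_reg_l (B ^ 1 - B + 1)); lra.
    + destruct (Nat.eq_dec m (S n)). 2: apply IHn; lia. subst.
      pose proof (fix_expand X 0 (S n) (HX 0%nat (S n))).
      pose proof (fix_expand (u b d) 0 (S n) (u_fix b d hb hd 0 (S n))). unfold Dsum in *.
      rewrite (sm_ext _ (fun k => _ * X 0%nat _) (fun k => Binomial.C (S n) (S k) * gam b d (S k) * u b d 0 (S n - S k)%nat)) in H.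
      2: { intros k Hk. rewrite IHn; auto. lia. }
      pose proof (den_pos b d hb hd (S n)). fold B in H1. apply (Rmult_eq_reg_l (B ^ S (S n) - B + 1)); lra.
  - assert (forall n m, (m <= n)%nat -> X (S j) m = u b d (S j) m). 2: intros m; apply (H m); lia.
    induction n; intros m Hm.
    + assert (m = 0)%nat by lia; subst. pose proof (fix_expand X (S j) 0 (HX (S j) 0%nat)).
      pose proof (fix_expand (u b d) (S j) 0 (u_fix b d hb hd (S j) 0)). simpl sm in *. unfold Dsum in *.
      rewrite (sm_ext _ (fun i => _ * X j _) (fun i => Binomial.C 0 i * INR d ^ i * u b d j (0 - i)%nat)) in H by (intros; rewrite IHj; auto).
      pose proof (den_pos b d hb hd 0). fold B in H1. apply (Rmult_eq_reg_l (B ^ 1 - B + 1)); lra.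
    + destruct (Nat.eq_dec m (S n)). 2: apply IHn; lia. subst.
      pose proof (fix_expand X (S j) (S n) (HX (S j) (S n))).
      pose proof (fix_expand (u b d) (S j) (S n) (u_fix b d hb hd (S j) (S n))). unfold Dsum in *.
      rewrite (sm_ext _ (fun k => _ * X (S j) _) (fun k => Binomial.C (S n) (S k) * gam b d (S k) * u b d (S j) (S n - S k)%nat)) in H.
      2: { intros k Hk. rewrite IHn; auto. lia. }
      rewrite (sm_ext _ (fun i => _ * X j _) (fun i => Binomial.C (S n) i * INR d ^ i * u b d j (S n - i)%nat)) in H.
      2: { intros k Hk. rewrite IHj; auto. }
      pose proof (den_pos b d hb hd (S n)). fold B in H1. apply (Rmult_eq_reg_l (B ^ S (S n) - B + 1)); lra. Qed.

Lemma U_lim j m : is_lim_seq (fun R => U b d R j m) (u b d j m).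
Proof. rewrite <- (fix_unique Lm). apply U_Lm.
  intros j' m'. apply (lim_uniq (fun R => B ^ S m' * U b d (S R) j' m')).
  - apply lim_scal. apply (is_lim_seq_incr_1 (fun R => U b d R j' m')). apply U_Lm.
  - eapply lim_ext. intros R. symmetry. apply U_rec; auto.
    apply is_lim_seq_plus'. apply is_lim_seq_const. apply Phi_lim. intros; apply U_Lm. Qed.

End HH.

End H.
Import H.

Module I.
Open Scope R_scope.

Section II.
Variables b d : nat.
Hypothesis hb : (2 <= b)%nat.
Hypothesis hd : (d < b)%nat.
Let B := INR b.

Lemma Wr_minus r j g h : Wr b d r j g - Wr b d r j h = Wr b d r j (fun x => g x - h x).
Proof. rewrite (Wr_ext b d r j (fun x => g x - h x) (fun x => g x + (-1) * h x)) by (intros; ring).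
  rewrite Wr_plus, Wr_scal by auto. ring. Qed.

Lemma diff_bound R j m : / B ^ R * U b d R j m <= U b d R j m - U b d R j (S m).
Proof. unfold U, W. rewrite <- sm_minus, <- sm_scal. apply sm_le; intros r Hr.
  rewrite Wr_minus, <- Wr_scal by auto. apply Wr_le; auto. intros t Ht.
  destruct (x_dom b d hb hd r t Ht) as [H1 H2]. fold B in H1, H2. set (x := INR t / B ^ r) in *.
  assert (/ B ^ R <= / B ^ r).
  { apply Rinv_le_contravar. apply (Bpow_pos b d hb hd). apply Rle_pow. pose proof (Bge2 b d hb hd); unfold B; lra. lia. }
  assert (0 <= x ^ m) by (apply pow_le; lra).
  simpl pow. assert (x ^ m * / B ^ R <= x ^ m * (1 - x)). { apply Rmult_le_compat_l; lra. } change (INR t / INR b ^ r) with x. nra. Qed.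

Lemma diff_incr R j m : U b d R j m - U b d R j (S m) <= U b d (S R) j m - U b d (S R) j (S m).
Proof. unfold U, W. rewrite (sm_Sr (S R)), (sm_Sr (S R) (fun r => Wr b d r j (fun x => x ^ S m))).
  assert (0 <= Wr b d (S R) j (fun x => x ^ m) - Wr b d (S R) j (fun x => x ^ S m)).
  { rewrite Wr_minus. apply Wr_nonneg; auto. intros x Hx. simpl. assert (0 <= x ^ m) by (apply pow_le; lra). nra. }
  lra. Qed.

Lemma u_dec_bound R j m : / B ^ R * U b d R j m <= u b d j m - u b d j (S m).
Proof. eapply Rle_trans. apply diff_bound.
  apply (is_lim_seq_incr_compare (fun R => U b d R j m - U b d R j (S m))).
  apply is_lim_seq_minus'; apply U_lim; auto. intros; apply diff_incr. Qed.

Lemma part_ii j m : u b d j (S m) <= u b d j m /\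
  (u b d j (S m) < u b d j m \/ (u b d j (S m) = 0 /\ u b d j m = 0)).
Proof. assert (Hle : u b d j (S m) <= u b d j m).
  { pose proof (u_dec_bound 0 j m). pose proof (U_le_u b d hb hd 0 j m).
    assert (0 <= U b d 0 j m). { unfold U, W. apply sm_nonneg; intros. apply Wr_nonneg; auto. intros; apply pow_le; lra. }
    simpl in H. rewrite Rinv_1 in H. nra. }
  split; auto. destruct m.
  - left. rewrite u_0. pose proof (u_lt_v b d hb hd j 1 ltac:(lia)). unfold v in H. simpl INR in H.
    pose proof (Bge2 b d hb hd). lra.
  - destruct (Req_dec (u b d j (S (S m))) (u b d j (S m))) as [Heq|Hne].
    2: { left; lra. }
    right. assert (HU : forall R, U b d R j (S m) <= 0).
    { intros R. pose proof (u_dec_bound R j (S m)). rewrite Heq, Rminus_diag in H.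
      pose proof (Bpow_pos b d hb hd R). assert (0 < / B ^ R) by (apply Rinv_0_lt_compat; auto).
      nra. }
    assert (u b d j (S m) <= 0).
    { pose proof (is_lim_seq_le _ _ _ _ HU (U_lim b d hb hd j (S m)) (is_lim_seq_const 0)). simpl in H. auto. }
    pose proof (u_nonneg b d hb hd j (S m)). lra. Qed.

End II.

End I.
Import I.

Module J.
Open Scope R_scope.

Lemma geom (N x : R) M : 1 <= N -> 0 <= x ->
  / (N + x) = sm (S M) (fun m => (-1) ^ m * x ^ m / N ^ (S m)) + (- x) ^ (S M) / (N ^ (S M) * (N + x)).
Proof. intros HN Hx.
  induction M.
  - simpl. field. lra.
  - rewrite IHM. rewrite (sm_Sr (S M)). cbv beta. assert (0 < N ^ S M) by (apply pow_lt; lra).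
    replace ((-x) ^ S (S M)) with ((-x) * (-x) ^ S M) by (simpl; ring).
    replace ((-1) ^ S M * x ^ S M) with ((-x) ^ S M).
    2: { rewrite <- Rpow_mult_distr. f_equal. ring. }
    replace (N ^ S (S M)) with (N * N ^ S M) by (simpl; ring).
    field. split; lra. Qed.

Lemma rem_bound (N x : R) M : 1 <= N -> 0 <= x ->
  - x ^ (S M) <= (- x) ^ (S M) / (N ^ (S M) * (N + x)) <= x ^ (S M).
Proof. intros HN Hx. assert (H1 : 1 <= N ^ S M * (N + x)).
  { assert (1 <= N ^ S M) by (apply pow_R1_Rle; lra). nra. }
  assert (0 <= x ^ S M) by (apply pow_le; lra).
  assert (Habs : Rabs ((- x) ^ (S M) / (N ^ (S M) * (N + x))) <= x ^ S M).
  { rewrite Rabs_div by lra. rewrite <- RPow_abs, Rabs_Ropp, (Rabs_right x) by lra.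
    rewrite (Rabs_right (N ^ S M * (N + x))) by lra.
    apply (Rmult_le_reg_r (N ^ S M * (N + x))). lra. field_simplify. nra. assert (0 < N ^ S M) by (apply pow_lt; lra). split; lra. }
  apply Rabs_le_between in Habs. lra. Qed.

Section JJ.
Variables b d : nat.
Hypothesis hb : (2 <= b)%nat.
Hypothesis hd : (d < b)%nat.
Let B := INR b.

Lemma Wr_le01 r j g h : (forall x, 0 <= x <= 1 -> g x <= h x) -> Wr b d r j g <= Wr b d r j h.
Proof. intros H. apply Wr_le; auto. intros t Ht. apply H. pose proof (x_dom b d hb hd r t Ht).
  pose proof (Bpow_pos b d hb hd r). assert (0 < / INR b ^ r) by (apply Rinv_0_lt_compat; auto). lra. Qed.

Lemma W_le01 R j g h : (forall x, 0 <= x <= 1 -> g x <= h x) -> W b d R j g <= W b d R j h.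
Proof. intros H. apply sm_le. intros; apply Wr_le01; auto. Qed.

Lemma W_ext01 R j g h : (forall x, 0 <= x <= 1 -> g x = h x) -> W b d R j g = W b d R j h.
Proof. intros H. apply Rle_antisym; apply W_le01; intros x Hx; rewrite H; auto; lra. Qed.

Lemma W_plus R j g h : W b d R j (fun x => g x + h x) = W b d R j g + W b d R j h.
Proof. unfold W. rewrite <- sm_plus. apply sm_ext; intros. apply Wr_plus; auto. Qed.

Lemma W_scal R j c g : W b d R j (fun x => c * g x) = c * W b d R j g.
Proof. unfold W. rewrite <- sm_scal. apply sm_ext; intros. apply Wr_scal; auto. Qed.

Lemma W_sm K j n (F : nat -> R -> R) : W b d K j (fun x => sm n (fun i => F i x)) = sm n (fun i => W b d K j (F i)).
Proof. unfold W. rewrite sm_swap. apply sm_ext; intros. apply Wr_sm; auto. Qed.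

Definition Fr R j (n : nat) := W b d R j (fun x => / (INR n + x)).
Definition Qs R j (n : nat) M := sm (S M) (fun m => (-1) ^ m * U b d R j m / INR n ^ S m).

Lemma Fr_Q R j n M : (1 <= n)%nat -> Rabs (Fr R j n - Qs R j n M) <= U b d R j (S M).
Proof. intros Hn. assert (HN : 1 <= INR n) by (apply (le_INR 1); lia).
  unfold Fr. rewrite (W_ext01 R j _ (fun x => sm (S M) (fun m => ((-1) ^ m / INR n ^ S m) * x ^ m) +
     (- x) ^ (S M) / (INR n ^ (S M) * (INR n + x)))).
  2: { intros x Hx. rewrite (geom (INR n) x M) by lra. f_equal. apply sm_ext; intros. field.
       apply pow_nonzero; lra. }
  rewrite W_plus, W_sm. unfold Qs.
  rewrite (sm_ext (S M) (fun i => W b d R j _) (fun m => (-1) ^ m * U b d R j m / INR n ^ S m)).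
  2: { intros m _. rewrite W_scal. unfold U. field. apply pow_nonzero; lra. }
  apply Rabs_le. unfold U. split.
  - replace (- W b d R j (fun x => x ^ S M)) with (W b d R j (fun x => (-1) * x ^ S M)) by (rewrite W_scal; ring).
    assert (W b d R j (fun x => (-1) * x ^ S M) <= W b d R j (fun x => (- x) ^ (S M) / (INR n ^ (S M) * (INR n + x)))).
    { apply W_le01. intros x Hx. pose proof (rem_bound (INR n) x M HN ltac:(lra)). lra. }
    lra.
  - assert (W b d R j (fun x => (- x) ^ (S M) / (INR n ^ (S M) * (INR n + x))) <= W b d R j (fun x => x ^ S M)).
    { apply W_le01. intros x Hx. pose proof (rem_bound (INR n) x M HN ltac:(lra)). lra. }
    lra. Qed.

Lemma Fr_incr R j n : (1 <= n)%nat -> Fr R j n <= Fr (S R) j n.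
Proof. intros Hn. assert (HN : 1 <= INR n) by (apply (le_INR 1); lia).
  unfold Fr, W. rewrite (sm_Sr (S R)). assert (0 <= Wr b d (S R) j (fun x => / (INR n + x))).
  { apply Wr_nonneg; auto. intros x Hx. apply Rlt_le, Rinv_0_lt_compat. lra. } lra. Qed.

Lemma Fr_bound R j n : (1 <= n)%nat -> Fr R j n <= u b d j 0.
Proof. intros Hn. assert (HN : 1 <= INR n) by (apply (le_INR 1); lia).
  eapply Rle_trans. 2: apply (U_le_u b d hb hd R j 0). unfold Fr, U. apply W_le01.
  intros x Hx. simpl. rewrite <- Rinv_1. apply Rinv_le_contravar; lra. Qed.

Definition Fl j n := real (Lim_seq (fun R => Fr R j n)).

Lemma Fr_lim j n : (1 <= n)%nat -> is_lim_seq (fun R => Fr R j n) (Fl j n).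
Proof. intros Hn. destruct (ex_finite_lim_seq_incr (fun R => Fr R j n) (u b d j 0) (fun R => Fr_incr R j n Hn) (fun R => Fr_bound R j n Hn)) as [l Hl].
  unfold Fl. rewrite (is_lim_seq_unique _ _ Hl). simpl. exact Hl. Qed.

Lemma v_lim0 : is_lim_seq (fun M => v b (S M)) 0.
Proof. unfold v. assert (H : is_lim_seq (fun M => INR (S (S M))) p_infty).
  { apply (is_lim_seq_incr_1 (fun M => INR (S M))). apply (is_lim_seq_incr_1 INR). apply is_lim_seq_INR. }
  apply is_lim_seq_inv in H. 2: discriminate. simpl in H.
  apply (lim_scal _ (INR b)) in H. rewrite Rmult_0_r in H. eapply lim_ext; [|exact H]. intros; unfold Rdiv; auto. Qed.

Lemma series_n j n : (1 <= n)%nat ->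
  is_lim_seq (fun M => sm (S M) (fun m => (-1) ^ m * u b d j m / INR n ^ S m)) (Fl j n).
Proof. intros Hn. assert (HN : 1 <= INR n) by (apply (le_INR 1); lia).
  set (QM := fun M => sm (S M) (fun m => (-1) ^ m * u b d j m / INR n ^ S m)).
  assert (HQ : forall M, is_lim_seq (fun R => Qs R j n M) (QM M)).
  { intros M. unfold Qs, QM. apply is_lim_seq_sm. intros m _.
    pose proof (lim_scal _ ((-1) ^ m / INR n ^ S m) _ (U_lim b d hb hd j m)) as H.
    replace ((-1) ^ m * u b d j m / INR n ^ S m) with ((-1) ^ m / INR n ^ S m * u b d j m) by (field; apply pow_nonzero; lra).
    eapply lim_ext; [|exact H]. intros K; simpl; field. split; [apply pow_nonzero|]; lra. }
  assert (Hb : forall M, Rabs (Fl j n - QM M) <= v b (S M)).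
  { intros M. assert (Hl := is_lim_seq_abs _ _ (is_lim_seq_minus' _ _ _ _ (Fr_lim j n Hn) (HQ M))).
    pose proof (is_lim_seq_le _ _ _ _ (fun R => Rle_trans _ _ _ (Fr_Q R j n M Hn) (Rle_trans _ _ _ (U_le_u b d hb hd R j (S M)) (u_le_v b d hb hd j (S M)))) Hl (is_lim_seq_const _)).
    simpl in H. exact H. }
  apply (is_lim_seq_le_le (fun M => Fl j n - v b (S M)) _ (fun M => Fl j n + v b (S M))).
  - intros M. specialize (Hb M). apply Rabs_le_between in Hb. fold (QM M). lra.
  - replace (Finite (Fl j n)) with (Finite (Fl j n - 0)) by (f_equal; ring).
    apply is_lim_seq_minus'. apply is_lim_seq_const. apply v_lim0.
  - replace (Finite (Fl j n)) with (Finite (Fl j n + 0)) by (f_equal; ring).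
    apply is_lim_seq_plus'. apply is_lim_seq_const. apply v_lim0. Qed.

End JJ.

End J.
Import J.

Module K.
Open Scope R_scope.

Section KK.
Variables b d : nat.
Hypothesis hb : (2 <= b)%nat.
Hypothesis hd : (d < b)%nat.
Let B := INR b.
Variable k : nat.
Let irw := irwin_term b d k.

Lemma irw_split n r t : (1 <= n)%nat -> (t < b ^ r)%nat ->
  irw (n * b ^ r + t) = if Nat.leb (dcount b d n) k then
    (if Nat.eqb (cnt b d r t) (k - dcount b d n) then / (INR n + INR t / B ^ r) / B ^ r else 0) else 0.
Proof. intros Hn Ht. unfold irw, irwin_term.
  assert (Nat.leb 1 (n * b ^ r + t) = true).
  { apply Nat.leb_le. assert (0 < b ^ r)%nat by (apply Nat.neq_0_lt_0, Nat.pow_nonzero; lia). nia. }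
  rewrite H. simpl andb. rewrite dcount_split by lia.
  destruct (Nat.leb_spec (dcount b d n) k); destruct (Nat.eqb_spec (cnt b d r t) (k - dcount b d n));
  destruct (Nat.eqb_spec (dcount b d n + cnt b d r t) k); try lia; auto.
  rewrite plus_INR, mult_INR, pow_INR. fold B. pose proof (Bpow_pos b d hb hd r). fold B in H1.
  assert (0 < INR n) by (apply (lt_INR 0); lia). assert (0 <= INR t) by apply pos_INR.
  assert (0 < INR n * B ^ r + INR t) by nra.
  assert (0 < INR n + INR t / B ^ r). { assert (0 <= INR t / B ^ r) by (apply Rdiv_le_0_compat; lra). lra. }
  field. repeat split; lra. Qed.

Lemma inner_sum n r : (1 <= n)%nat ->
  sm (b ^ r) (fun t => irw (n * b ^ r + t)) =
  if Nat.leb (dcount b d n) k then Wr b d r (k - dcount b d n) (fun x => / (INR n + x)) else 0.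
Proof. intros Hn. rewrite (sm_ext _ _ _ (fun t Ht => irw_split n r t Hn Ht)).
  destruct (Nat.leb (dcount b d n) k). unfold Wr. apply sm_ext. intros; auto.
  apply sm_zero; auto. Qed.

Lemma P_decomp lo hi N : (1 <= lo)%nat -> hi = (lo * b)%nat ->
  sm (hi * b ^ N) irw = sm lo irw +
  sm (S N) (fun r => sm (hi - lo) (fun i => sm (b ^ r) (fun t => irw ((lo + i) * b ^ r + t)%nat))).
Proof. intros Hlo Hhi. induction N.
  - rewrite Nat.pow_0_r, Nat.mul_1_r. replace hi with (lo + (hi - lo))%nat at 1 by nia.
    rewrite sm_split. simpl (sm 1 _). rewrite Rplus_0_l. f_equal. apply sm_ext. intros i _.
    simpl. rewrite Nat.mul_1_r, Nat.add_0_r. ring.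
  - replace (hi * b ^ S N)%nat with (hi * b ^ N + (hi - lo) * b ^ S N)%nat.
    2: { rewrite Nat.mul_sub_distr_r. rewrite Nat.pow_succ_r'. subst hi. assert (lo * b * (b * b ^ N) >= lo * b ^ N * b)%nat by nia. nia. }
    rewrite sm_split, IHN, sm_block. rewrite (sm_Sr (S N)). rewrite Rplus_assoc. f_equal. f_equal.
    apply sm_ext. intros i _. apply sm_ext. intros t _. f_equal.
    rewrite Nat.pow_succ_r'. subst hi. nia. Qed.

Definition dn n := dcount b d n.

Lemma P_form lo hi N : (1 <= lo)%nat -> hi = (lo * b)%nat ->
  sm (hi * b ^ N) irw = sm lo irw +
  sm (hi - lo) (fun i => if Nat.leb (dn (lo + i)) k then Fr b d N (k - dn (lo + i)) (lo + i) else 0).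
Proof. intros Hlo Hhi. rewrite (P_decomp lo hi N) by auto. f_equal. rewrite sm_swap. apply sm_ext. intros i _.
  rewrite (sm_ext _ _ _ (fun r _ => inner_sum (lo + i) r ltac:(lia))). unfold dn.
  destruct (Nat.leb (dcount b d (lo + i)) k). reflexivity. apply sm_zero; auto. Qed.

End KK.

End K.
Import K.

Module L.
Open Scope R_scope.

Lemma sm_mono_n n m f : (n <= m)%nat -> (forall i, 0 <= f i) -> sm n f <= sm m f.
Proof. intros H Hf. replace m with (n + (m - n))%nat by lia. rewrite sm_split.
  assert (0 <= sm (m - n) (fun i => f (n + i)%nat)) by (apply sm_nonneg; auto). lra. Qed.

Lemma strict_ge (phi : nat -> nat) : (forall n, (phi n < phi (S n))%nat) -> forall n, (n <= phi n)%nat.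
Proof. intros H n. induction n. lia. specialize (H n). lia. Qed.

Section LL.
Variables b d : nat.
Hypothesis hb : (2 <= b)%nat.
Hypothesis hd : (d < b)%nat.
Let B := INR b.
Variables k l : nat.
Hypothesis hl : (1 <= l)%nat.
Let irw := irwin_term b d k.
Let lo := (b ^ (l - 1))%nat.
Let hi := (b ^ l)%nat.

Lemma lo_pos : (1 <= lo)%nat.
Proof. unfold lo. assert (b ^ (l - 1) <> 0)%nat by (apply Nat.pow_nonzero; lia). lia. Qed.

Lemma hi_eq : hi = (lo * b)%nat.
Proof. unfold hi, lo. replace l with (S (l - 1)) at 1 by lia. rewrite Nat.pow_succ_r'. lia. Qed.

Definition Fsum := sm (hi - lo) (fun i => if Nat.leb (dn b d (lo + i)) k then Fl b d (k - dn b d (lo + i)) (lo + i) else 0).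

Lemma irw_nonneg n : 0 <= irw n.
Proof. unfold irw, irwin_term. destruct (Nat.leb_spec 1 n); simpl; [|lra].
  destruct (Nat.eqb _ k); [|lra]. apply Rlt_le, Rinv_0_lt_compat, (lt_INR 0); lia. Qed.

Lemma P_lim : is_lim_seq (fun N => sm (hi * b ^ N) irw) (sm lo irw + Fsum).
Proof. eapply lim_ext. intros N. symmetry. apply (P_form b d hb hd k lo hi N lo_pos hi_eq).
  apply is_lim_seq_plus'. apply is_lim_seq_const. unfold Fsum. apply is_lim_seq_sm. intros i _.
  destruct (Nat.leb _ k). apply Fr_lim; auto. pose proof lo_pos; lia. apply is_lim_seq_const. Qed.

Lemma irw_series : is_series irw (sm lo irw + Fsum).
Proof. set (X := sm lo irw + Fsum).
  set (s := fun N => sum_n irw N).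
  assert (Hs : forall N, s N = sm (S N) irw) by (intros; apply sum_n_sm).
  assert (Hinc : forall N, s N <= s (S N)). { intros; rewrite !Hs. apply sm_mono_n; auto. apply irw_nonneg. }
  set (phi := fun N => (hi * b ^ N - 1)%nat).
  assert (Hpos : forall N, (1 <= hi * b ^ N)%nat).
  { intros N. pose proof lo_pos. rewrite hi_eq. assert (b ^ N <> 0)%nat by (apply Nat.pow_nonzero; lia). nia. }
  assert (Hphi : forall N, (phi N < phi (S N))%nat).
  { intros N. unfold phi. rewrite Nat.pow_succ_r'. specialize (Hpos N). nia. }
  assert (Hsub : is_lim_seq (fun N => s (phi N)) X).
  { eapply lim_ext. 2: apply P_lim. intros N. rewrite Hs. unfold phi. specialize (Hpos N). f_equal. lia. }
  assert (Hbd : forall N, s N <= X).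
  { intros N. apply Rle_trans with (s (phi N)).
    - rewrite !Hs. apply sm_mono_n. pose proof (strict_ge phi Hphi N). lia. apply irw_nonneg.
    - apply (is_lim_seq_incr_compare (fun N => s (phi N))); auto. intros n.
      rewrite !Hs. apply sm_mono_n. specialize (Hphi n). lia. apply irw_nonneg. }
  destruct (ex_finite_lim_seq_incr s X Hinc Hbd) as [Y HY].
  assert (Y = X). { apply (lim_uniq (fun N => s (phi N))); auto. apply (is_lim_seq_subseq s Y phi); auto.
    apply eventually_subseq; auto. }
  subst Y. unfold is_series. unfold is_lim_seq in HY. simpl in HY. exact HY. Qed.

Definition T m' := sm (hi - lo) (fun i => if Nat.leb (dn b d (lo + i)) k then
   u b d (k - dn b d (lo + i)) m' / INR (lo + i) ^ S m' else 0).

Lemma alt_sum M : sm (S M) (fun m' => (-1) ^ m' * T m') = sm (hi - lo) (fun i => if Nat.leb (dn b d (lo + i)) k then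
   sm (S M) (fun m => (-1) ^ m * u b d (k - dn b d (lo + i)) m / INR (lo + i) ^ S m) else 0).
Proof. unfold T. rewrite (sm_ext _ _ (fun m' => sm (hi - lo) (fun i => (-1) ^ m' * (if Nat.leb (dn b d (lo + i)) k then
   u b d (k - dn b d (lo + i)) m' / INR (lo + i) ^ S m' else 0)))).
  2: { intros; rewrite sm_scal; auto. }
  rewrite sm_swap. apply sm_ext. intros i _. destruct (Nat.leb _ k). apply sm_ext; intros; unfold Rdiv; ring.
  apply sm_zero; intros; ring. Qed.

Lemma alt_lim : is_lim_seq (fun M => sm (S M) (fun m' => (-1) ^ m' * T m')) Fsum.
Proof. eapply lim_ext. intros M; symmetry; apply alt_sum. unfold Fsum. apply is_lim_seq_sm. intros i _.
  destruct (Nat.leb _ k). apply series_n; auto. pose proof lo_pos; lia. apply is_lim_seq_const. Qed.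

Lemma tail_series : is_series (fun m => (-1) ^ (S m) * T (S m)) (Fsum - T 0).
Proof. unfold is_series. change (is_lim_seq (sum_n (fun m => (-1) ^ (S m) * T (S m))) (Fsum - T 0)).
  assert (H1 : is_lim_seq (fun M => sm (S (S M)) (fun m' => (-1) ^ m' * T m')) Fsum).
  { apply (proj1 (is_lim_seq_incr_1 (fun M => sm (S M) (fun m' => (-1) ^ m' * T m')) Fsum)). apply alt_lim. }
  eapply lim_ext. 2: apply (is_lim_seq_minus' _ _ _ _ H1 (is_lim_seq_const (T 0))).
  intros M. rewrite sum_n_sm. rewrite (sm_S_l (S M)). cbv beta. rewrite pow_O. ring. Qed.

End LL.

End L.
Import L.


Theorem mainTheorem1 (b d : nat) (hb : (2 <= b)%nat) (hd : (d < b)%nat) :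
  (forall k l : nat, (1 <= l)%nat ->
     ex_series (irwin_term b d k) /\
     ex_series (fun m : nat => (-1) ^ (S m) *
        fsum (b ^ (l - 1)) (b ^ l) (fun n =>
          if Nat.leb (dcount b d n) k
          then u b d (k - dcount b d n) (S m) / INR n ^ (S (S m)) else 0)) /\
     irwin_sum b d k =
       fsum 1 (b ^ (l - 1)) (fun n => if Nat.eqb (dcount b d n) k then / INR n else 0)
       + INR b * fsum (b ^ (l - 1)) (b ^ l)
                  (fun n => if Nat.leb (dcount b d n) k then / INR n else 0)
       + Series (fun m : nat => (-1) ^ (S m) *
           fsum (b ^ (l - 1)) (b ^ l) (fun n =>
             if Nat.leb (dcount b d n) k
             then u b d (k - dcount b d n) (S m) / INR n ^ (S (S m)) else 0)))
  /\
  (forall j m : nat, (1 <= m)%nat ->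
     0 <= u b d j m /\ (u b d j m = 0 -> j = 0%nat /\ b = 2%nat /\ d = 1%nat))
  /\
  (forall j m : nat,
     u b d j (S m) <= u b d j m /\
     (u b d j (S m) < u b d j m \/ (u b d j (S m) = 0 /\ u b d j m = 0)))
  /\
  (forall m : nat, (1 <= m)%nat ->
     (forall j : nat, u b d j m < u b d (S j) m) /\
     is_lim_seq (fun j => u b d j m) (INR b / INR (m + 1))).
Proof.
  split; [|split; [|split]].
  - intros k l hl.
    pose proof (irw_series b d hb hd k l hl) as HS.
    assert (HT : is_series (fun m : nat => (-1) ^ (S m) *
        fsum (b ^ (l - 1)) (b ^ l) (fun n =>
          if Nat.leb (dcount b d n) k
          then u b d (k - dcount b d n) (S m) / INR n ^ (S (S m)) else 0)) (Fsum b d k l - T b d k l 0)).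
    { eapply is_series_ext. 2: apply (tail_series b d hb hd k l hl).
      intros m. f_equal. rewrite fsum_sm. unfold T, dn. reflexivity. }
    split; [eexists; exact HS|]. split; [eexists; exact HT|].
    unfold irwin_sum. rewrite (is_series_unique _ _ HS), (is_series_unique _ _ HT).
    assert (HT0 : T b d k l 0 = INR b * fsum (b ^ (l - 1)) (b ^ l) (fun n => if Nat.leb (dcount b d n) k then / INR n else 0)).
    { unfold T. rewrite fsum_sm, <- sm_scal. apply sm_ext. intros i _. unfold dn.
      destruct (Nat.leb _ k). rewrite u_0. simpl. field. apply not_0_INR.
      pose proof (lo_pos b d hb hd l hl). lia. ring. }
    assert (HA : sm (b ^ (l - 1)) (irwin_term b d k) = fsum 1 (b ^ (l - 1)) (fun n => if Nat.eqb (dcount b d n) k then / INR n else 0)).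
    { rewrite fsum_sm. pose proof (lo_pos b d hb hd l hl).
      replace (b ^ (l - 1))%nat with (S (b ^ (l - 1) - 1)) at 1 by lia. rewrite sm_S_l.
      unfold irwin_term at 1. simpl (Nat.leb 1 0). simpl andb. rewrite Rplus_0_l. apply sm_ext. intros i _.
      unfold irwin_term. simpl. reflexivity. }
    rewrite HA, HT0. ring.
  - intros j m hm. split. apply u_nonneg; auto. intros H0.
    destruct (Nat.eq_dec j 0); destruct (Nat.eq_dec b 2); destruct (Nat.eq_dec d 1); auto;
    exfalso; (assert (0 < u b d j m) by (apply u_pos; auto; lia)); lra.
  - intros j m. apply part_ii; auto.
  - intros m hm. split. intros j. apply u_incr; auto. apply u_lim; auto.
Qed.
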